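(* Assume $p=m$, $D=0$, and $\mathrm{rank}\begin{bmatrix} I-A & B\\ C & 0\end{bmatrix}=n+m$. Let $(X,U)$ be a minimizer of Problem 3. Then the equation $\begin{bmatrix} K & H \\ G & F \end{bmatrix}\begin{bmatrix} X \\ Z \end{bmatrix} = \begin{bmatrix} U \\ V \end{bmatrix}$ has a unique solution $(K,H,G,F)$. Suppose moreover that (i) $\det(I-(A+BK))\neq 0$ and (ii) $\det(I-F)\neq 0$. Then $C(I-(A+BK))^{-1}B$ is invertible and, with $$M=\big(C(I-(A+BK))^{-1}B\big)^{-1},\qquad L=-G(I-(A+BK))^{-1}BM,$$ for every initial state $x_0\in\mathbb{R}^n$ and every constant reference value $r_+\in\mathbb{R}^m$, the closed-loop system $\psi_r(t+1)=\mathcal{A}_{cl}\psi_r(t)+\mathcal{M}_r r_+$, $y(t)=\mathcal{C}\psi_r(t)$ has a unique steady state $\psi_\infty=(x_\infty,z_\infty)$ (i.e. a unique solution of $\psi_\infty=\mathcal{A}_{cl}\psi_\infty+\mathcal{M}_r r_+$), and it satisfies $y_\infty=Cx_\infty=r_+$ and $z_\infty=0$.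
   Context: Plant: $x(t+1)=Ax(t)+Bu(t)$, $x(0)=x_0$, $y(t)=Cx(t)$, with $x\in\mathbb{R}^n$, $u,y\in\mathbb{R}^m$, $(A,B)$ reachable, horizon $N\ge 2$. $P\in\mathbb{R}^{N\times N}$ is the nilpotent shift matrix $P=\begin{bmatrix}0 & 0\\ I_{N-1} & 0\end{bmatrix}$; $\otimes$ is the Kronecker product; $\mathrm{e}_1\in\mathbb{R}^N$; $\|W\|_1=\sum_{i,j}|w_{ij}|$. Problem 3 (minimum attention control): minimize $\|U(P\otimes I_n)-U\|_1$ over $X\in\mathbb{R}^{n\times nN}$, $U\in\mathbb{R}^{m\times nN}$ subject to $AX+BU=X(P\otimes I_n)$ and $X(\mathrm{e}_1\otimes I_n)=I_n$. $Z=\begin{bmatrix}0_{n(N-1)\times n} & I_{n(N-1)}\end{bmatrix}$, $V=Z(P\otimes I_n)$. Tracking compensator: $z_r(t+1)=Fz_r(t)+Gx(t)+Lr(t)$, $u(t)=Hz_r(t)+Kx(t)+Mr(t)$, $z_r(0)=0$. Closed-loop augmented system with $\psi_r=(x,z_r)$: $\mathcal{A}_{cl}=\begin{bmatrix}A+BK & BH\\ G & F\end{bmatrix}$, $\mathcal{M}_r=\begin{bmatrix}BM\\ L\end{bmatrix}$, $\mathcal{C}=[C~~0]$. *)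

(* Defs.v *)
From HB Require Import structures.
From mathcomp Require Import all_boot all_order all_algebra.
From mathcomp Require Import mxtens.
Set Implicit Arguments. Unset Strict Implicit. Unset Printing Implicit Defensive.
Import Order.TTheory GRing.Theory Num.Theory.
Local Open Scope ring_scope.

(* Kronecker product: tensmx from mathcomp-real-closed (mxtens.v), with the
   standard index ordering (i1, i2) |-> i1 * m2 + i2. *)

Definition shiftP (R : pzRingType) (N : nat) : 'M[R]_N :=
  \matrix_(i < N, j < N) ((val i == (val j).+1)%N)%:R.

Definition e1 (R : pzRingType) (N : nat) : 'cV[R]_N :=
  \col_(i < N) ((val i == 0)%N)%:R.

Definition PkronI (R : pzRingType) (n N : nat) : 'M[R]_(N * n) :=
  tensmx (shiftP R N) (1%:M : 'M[R]_n).

Definition e1kronI (R : pzRingType) (n N : nat) : 'M[R]_(N * n, n) :=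
  castmx (erefl (N * n)%N, mul1n n) (tensmx (e1 R N) (1%:M : 'M[R]_n)).

Definition Zmat (R : pzRingType) (n N : nat) : 'M[R]_(n * (N - 1), N * n) :=
  \matrix_(i, j) ((val j == n + val i)%N)%:R.

Definition l1norm (R : numDomainType) (p q : nat) (W : 'M[R]_(p, q)) : R :=
  \sum_(i < p) \sum_(j < q) `|W i j|.

Definition reachable (R : fieldType) (n m : nat) (A : 'M[R]_n) (B : 'M[R]_(n, m)) : bool :=
  row_full (\sum_(k < n) <<(A ^+ k *m B)^T>>)%MS.

Definition feasible3 (R : realFieldType) (n m N : nat)
  (A : 'M[R]_n) (B : 'M[R]_(n, m)) (X : 'M[R]_(n, N * n)) (U : 'M[R]_(m, N * n)) : Prop :=
  A *m X + B *m U = X *m PkronI R n N /\ X *m e1kronI R n N = 1%:M.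

Definition minimizer3 (R : realFieldType) (n m N : nat)
  (A : 'M[R]_n) (B : 'M[R]_(n, m)) (X : 'M[R]_(n, N * n)) (U : 'M[R]_(m, N * n)) : Prop :=
  feasible3 A B X U /\
  forall X' U', feasible3 A B X' U' ->
    l1norm (U *m PkronI R n N - U) <= l1norm (U' *m PkronI R n N - U').

Definition Vmat (R : pzRingType) (n N : nat) : 'M[R]_(n * (N - 1), N * n) :=
  Zmat R n N *m PkronI R n N.

Definition gain_eq (R : realFieldType) (n m N : nat)
  (X : 'M[R]_(n, N * n)) (U : 'M[R]_(m, N * n))
  (K : 'M[R]_(m, n)) (H : 'M[R]_(m, n * (N - 1)))
  (G : 'M[R]_(n * (N - 1), n)) (F : 'M[R]_(n * (N - 1))) : Prop :=
  block_mx K H G F *m col_mx X (Zmat R n N) = col_mx U (Vmat R n N).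

(* Main.v *)
Require Import Defs.
From HB Require Import structures.
From mathcomp Require Import all_boot all_order all_algebra.
From mathcomp Require Import mxtens.
From mathcomp Require Import zify.
Set Implicit Arguments. Unset Strict Implicit. Unset Printing Implicit Defensive.
Import Order.TTheory GRing.Theory Num.Theory.
Local Open Scope ring_scope.

Lemma sum_delta (R : pzRingType) (p a : nat) (f : 'I_p -> R) (h : (a < p)%N) :
  \sum_(j < p) ((val j == a)%N)%:R * f j = f (Ordinal h).
Proof.
rewrite (bigD1 (Ordinal h)) //= eqxx mul1r big1 ?addr0 // => j hj.
suff -> : (val j == a) = false by rewrite mul0r.
apply/negbTE; apply: contra hj => /eqP hj; apply/eqP/val_inj; by rewrite /= hj.
Qed.

Lemma sum_delta0 (R : pzRingType) (p a : nat) (f : 'I_p -> R) : (p <= a)%N ->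
  \sum_(j < p) ((val j == a)%N)%:R * f j = 0.
Proof.
move=> h; rewrite big1 // => j _.
suff -> : (val j == a) = false by rewrite mul0r.
apply/negbTE; apply/eqP => hj; move: (ltn_ord j); rewrite hj; lia.
Qed.

Lemma ZE1 (R : pzRingType) n N : Zmat R n N *m e1kronI R n N = 0.
Proof.
apply/matrixP => i k; rewrite !mxE.
under eq_bigr do rewrite !mxE.
case: (ltnP (n + i) (N * n)) => h; last by rewrite sum_delta0.
rewrite (sum_delta _ h) castmxE !mxE /=.
have n0 : (0 < n)%N by rewrite lt0n; apply/eqP => n0; have := ltn_ord i; move: (val i) => a; rewrite n0 mul0n.
have : (0 < (n + i) %/ n)%N by rewrite divn_gt0 // leq_addr.
by rewrite lt0n => /negbTE ->; rewrite mul0r.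
Qed.

Lemma ZZt (R : pzRingType) n N : Zmat R n N *m (Zmat R n N)^T = 1%:M.
Proof.
apply/matrixP => i k; rewrite !mxE.
under eq_bigr do rewrite !mxE.
case: (ltnP (n + i) (N * n)) => h.
  by rewrite (sum_delta _ h) /= eqn_add2l.
exfalso; move: h.
have := ltn_ord i; move: (val i) => a.
case: N {i k} => [|N]; first by rewrite /= mul0n; lia.
rewrite subSS subn0; nia.
Qed.

Lemma shiftP_pow (R : pzRingType) N k (i j : 'I_N) :
  ((shiftP R N) ^+ k.+1) i j != 0 -> (j + k.+1 <= i)%N.
Proof.
elim: k i j => [|k IH] i j.
  rewrite expr1 mxE; case: (eqVneq (val i) (val j).+1) => [->|]; first by rewrite addn1.
  by rewrite eqxx.
apply: contraR => hij.
rewrite exprS -mulmxE mxE big1 // => l _.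
rewrite mxE; case: (eqVneq (val i) (val l).+1) => [e|]; last by rewrite mul0r.
case: (eqVneq ((shiftP R N ^+ k.+1) l j) 0) => [->|/IH h]; first by rewrite mulr0.
exfalso; move/negP: hij; apply; rewrite e; move: h; rewrite !addnS; done.
Qed.

Lemma shiftP_nil (R : pzRingType) N : (shiftP R N) ^+ N = 0.
Proof.
case: N => [|N]; first by apply/matrixP => [[]].
apply/matrixP => i j; rewrite mxE; apply/eqP; apply: contraT => /shiftP_pow.
have := ltn_ord i; lia.
Qed.

Lemma PkronI_pow (R : comPzRingType) n N k :
  (PkronI R n N) ^+ k.+1 = tensmx (shiftP R N ^+ k.+1) (1%:M : 'M[R]_n).
Proof.
elim: k => [|k IH]; first by rewrite !expr1.
rewrite exprS IH.
change (PkronI R n N *m (shiftP R N ^+ k.+1 *t 1%:M) = shiftP R N ^+ k.+2 *t 1%:M).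
by rewrite /PkronI tensmx_mul mul1mx mulmxE -exprS.
Qed.

Lemma PkronI_nil (R : comPzRingType) n N : (1 <= N)%N -> (PkronI R n N) ^+ N = 0.
Proof.
case: N => // N _; by rewrite PkronI_pow shiftP_nil tens0mx.
Qed.

Theorem lemma1 (R : realFieldType) (n m N : nat)
  (A : 'M[R]_n) (B : 'M[R]_(n, m)) (C : 'M[R]_(m, n))
  (X : 'M[R]_(n, N * n)) (U : 'M[R]_(m, N * n)) :
  (2 <= N)%N ->
  reachable A B ->
  \rank (block_mx (1%:M - A) B C (0 : 'M[R]_m)) = (n + m)%N ->
  minimizer3 A B X U ->
  (exists K H G F,
     gain_eq X U K H G F /\
     forall K' H' G' F', gain_eq X U K' H' G' F' ->
       [/\ K' = K, H' = H, G' = G & F' = F])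
  /\
  (forall K H G F, gain_eq X U K H G F ->
     \det (1%:M - (A + B *m K)) != 0 ->
     \det (1%:M - F) != 0 ->
     let S := C *m invmx (1%:M - (A + B *m K)) *m B in
     S \in unitmx /\
     let M := invmx S in
     let L := - (G *m invmx (1%:M - (A + B *m K)) *m B *m M) in
     let Acl := block_mx (A + B *m K) (B *m H) G F in
     let Mr := col_mx (B *m M) L in
     let Ccl := row_mx C (0 : 'M[R]_(m, n * (N - 1))) in
     forall (x0 : 'cV[R]_n) (rp : 'cV[R]_m),
       exists psi : 'cV[R]_(n + n * (N - 1)),
         psi = Acl *m psi + Mr *m rp /\
         (forall psi', psi' = Acl *m psi' + Mr *m rp -> psi' = psi) /\
         Ccl *m psi = rp /\ C *m usubmx psi = rp /\ dsubmx psi = 0).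
Proof.
move=> hN _ hrkB [[hAX hXE1] _].
set T := col_mx X (Zmat R n N).
set E1 := e1kronI R n N.
set Zt := (Zmat R n N)^T.
set W := Zt - E1 *m (X *m Zt).
have hTT : T *m row_mx E1 W = 1%:M.
  rewrite mul_col_row hXE1 ZE1 /W !mulmxBr ZZt !mulmxA hXE1 mul1mx subrr.
  rewrite -mulmxA ZE1 mul0mx subr0 -scalar_mx_block //.
have hdim : (n + n * (N - 1) = N * n)%N by nia.
have hrk : \rank T = (n + n * (N - 1))%N.
  apply/eqP; rewrite eqn_leq rank_leq_row /=.
  by rewrite -{1}(mxrank1 R (n + n * (N - 1))) -hTT mxrankM_maxl.
have hfree : row_free T by rewrite /row_free hrk.
have hfull : row_full T by rewrite /row_full hrk hdim.
split.
  set Mb := col_mx U (Vmat R n N) *m pinvmx T.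
  have hMb : Mb *m T = col_mx U (Vmat R n N) by rewrite /Mb mulmxKpV // submx_full.
  exists (ulsubmx Mb), (ursubmx Mb), (dlsubmx Mb), (drsubmx Mb); split.
    by rewrite /gain_eq submxK.
  move=> K' H' G' F' h'.
  have e : block_mx K' H' G' F' = Mb by apply: (row_free_inj hfree); rewrite /= h' hMb.
  by rewrite -e block_mxKul block_mxKur block_mxKdl block_mxKdr.
move=> K H G F hg hdet1 hdetF S.
set Q := invmx (1%:M - (A + B *m K)).
have hQu : (1%:M - (A + B *m K)) \in unitmx by rewrite unitmxE unitfE.
have hg' := hg; rewrite /gain_eq mul_block_col in hg'; case/eq_col_mx: hg' => hU hV.
have hw : forall w : 'rV[R]_m, w *m S = 0 -> w = 0.
  move=> w hwS.
  set y := w *m C *m Q.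
  have hyB : y *m B = 0 by rewrite /y -hwS /S !mulmxA.
  have hy : y *m (1%:M - (A + B *m K)) = w *m C by rewrite /y /Q mulmxKV.
  have hyA : y *m (1%:M - A) = w *m C.
    by rewrite -hy !mulmxBr mulmxDr mulmxA hyB mul0mx addr0.
  have hbf : row_free (block_mx (1%:M - A) B C (0 : 'M[R]_m)) by rewrite /row_free hrkB.
  have : row_mx y (- w) *m block_mx (1%:M - A) B C (0 : 'M[R]_m) = 0.
    by rewrite mul_row_block hyA hyB mulNmx subrr mulmx0 addr0 row_mx0.
  move/eqP; rewrite (mulmx_free_eq0 _ hbf) -row_mx0 => /eqP /eq_row_mx [_].
  by move/eqP; rewrite oppr_eq0 => /eqP.
have hSu : S \in unitmx.
  rewrite -row_free_unit -kermx_eq0; apply/eqP/row_matrixP => i.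
  by rewrite row0; apply: hw; rewrite -row_mul mulmx_ker row0.
split => // M L Acl Mr Ccl x0 rp.
have hAT : Acl *m T = T *m PkronI R n N.
  rewrite /Acl /T mul_block_col mul_col_mx; congr col_mx.
    by rewrite mulmxDl -!mulmxA -addrA -mulmxDr hU hAX.
  by rewrite hV.
have hpow : forall k, Acl ^+ k *m T = T *m PkronI R n N ^+ k.
  elim => [|k IH]; first by rewrite !expr0 mul1mx mulmx1.
  rewrite !exprS -!mulmxE -mulmxA IH mulmxA hAT -mulmxA //.
have hnil : Acl ^+ N = 0.
  rewrite -[Acl ^+ N]mulmx1 -hTT mulmxA hpow PkronI_nil ?mulmx0 ?mul0mx //.
  exact: leq_trans hN.
set v := B *m M *m rp.
set xi := Q *m v.
have hx : (1%:M - (A + B *m K)) *m xi = v by rewrite /xi /Q mulmxA mulmxV // mul1mx.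
exists (col_mx xi 0).
have hfix : col_mx xi 0 = Acl *m col_mx xi 0 + Mr *m rp.
  rewrite /Acl /Mr mul_block_col mul_col_mx add_col_mx !mulmx0 !addr0.
  congr col_mx.
    rewrite -/v; by move: hx; rewrite mulmxBl mul1mx => <-; rewrite addrC subrK.
  by rewrite /L mulNmx /xi /v !mulmxA subrr.
split => //; split.
  move=> psi' hpsi'.
  have hd : psi' - col_mx xi 0 = Acl *m (psi' - col_mx xi 0).
    by rewrite mulmxBr {1}hpsi' {1}hfix opprD addrACA subrr addr0.
  have : forall k, psi' - col_mx xi 0 = Acl ^+ k *m (psi' - col_mx xi 0).
    elim => [|k IH]; first by rewrite expr0 mul1mx.
    by rewrite exprSr -mulmxE -mulmxA -hd.
  move/(_ N); rewrite hnil mul0mx => /eqP; rewrite subr_eq0 => /eqP //.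
have hC : C *m xi = rp.
  by rewrite /xi /v /M !mulmxA -/S mulmxV // mul1mx.
rewrite col_mxKu col_mxKd hC; split => //.
by rewrite /Ccl mul_row_col mul0mx addr0 hC.
Qed.
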